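(* Let $F(x)=\sum_{n\ge 1} f(n)x^n$ be a formal power series with $f(1)=1$ and composita $F^{\Delta}(n,k)$, and let $A(x)=\sum_{n\ge 1}a(n)x^n$ be its reverse series, i.e. $F(A(x))=x$. Then $a(1)=1$ and for $n>1$ $$a(n)=\frac{1}{n}\sum_{k=1}^{n-1}\binom{n+k-1}{n-1}\sum_{j=1}^{k}(-1)^j\binom{k}{j}F^{\Delta}(n+j-1,j).$$
   Context: All generating functions are formal power series in $x$. For a power series $F(x)=\sum_{n\ge 1} f(n)x^n$ with zero constant term, its composita is the two-variable function $F^{\Delta}(n,k)$ ($n\ge k\ge 1$) defined by $F^{\Delta}(n,k)=\sum_{\lambda_1+\cdots+\lambda_k=n}f(\lambda_1)f(\lambda_2)\cdots f(\lambda_k)$, where the sum runs over all compositions of $n$ into exactly $k$ positive integer parts; equivalently $[F(x)]^k=\sum_{n\ge k}F^{\Delta}(n,k)x^n$. *)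

(* Defs.v *)
From HB Require Import structures.
From mathcomp Require Import all_boot all_order all_algebra.
Set Implicit Arguments. Unset Strict Implicit. Unset Printing Implicit Defensive.
Import Order.TTheory GRing.Theory Num.Theory.
Local Open Scope ring_scope.

(* A formal power series F(x) = sum_n f(n) x^n is represented by its
   coefficient sequence f : nat -> R.
   composita f n k = sum over compositions (l_1,...,l_k) of n into exactly k
   positive parts of f(l_1)...f(l_k).  A composition is a function
   t : 'I_k -> 'I_(n+1) with positive values summing to n. *)
Definition composita (R : pzSemiRingType) (f : nat -> R) (n k : nat) : R :=
  \sum_(t : {ffun 'I_k -> 'I_n.+1} |
          ((\sum_(i < k) (t i : nat))%N == n) && [forall i, 0 < (t i : nat)]%N)
     \prod_(i < k) f (t i).

(* [x^n] F(A(x)) for series with zero constant terms: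
   sum_{k=1}^{n} f(k) [x^n] A(x)^k = sum_{k=1}^n f(k) A^Delta(n,k). *)
Definition comp_coef (R : pzSemiRingType) (f a : nat -> R) (n : nat) : R :=
  \sum_(1 <= k < n.+1) f k * composita a n k.

(* Main.v *)
Require Import Defs.
From HB Require Import structures.
From mathcomp Require Import all_boot all_order all_algebra.
From mathcomp Require Import zify ring lra.
Import Order.TTheory GRing.Theory Num.Theory.
Local Open Scope ring_scope.

Set Implicit Arguments. Unset Strict Implicit. Unset Printing Implicit Defensive.

Section Eqm.
Variable R : comNzRingType.
Implicit Types p q s : {poly R}.

Definition eqm N p q := forall i, (i < N)%N -> p`_i = q`_i.

Lemma eqm_refl N p : eqm N p p. Proof. by []. Qed.
Lemma eqm_sym N p q : eqm N p q -> eqm N q p.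
Proof. by move=> h i hi; rewrite h. Qed.
Lemma eqm_trans N p q s : eqm N p q -> eqm N q s -> eqm N p s.
Proof. by move=> h1 h2 i hi; rewrite h1 // h2. Qed.
Lemma eqm_le M N p q : (M <= N)%N -> eqm N p q -> eqm M p q.
Proof. by move=> hMN h i hi; apply: h; apply: leq_trans hMN. Qed.
Lemma eqmD N p q p' q' : eqm N p p' -> eqm N q q' -> eqm N (p + q) (p' + q').
Proof. by move=> h1 h2 i hi; rewrite !coefD h1 // h2. Qed.
Lemma eqmM N p q p' q' : eqm N p p' -> eqm N q q' -> eqm N (p * q) (p' * q').
Proof.
move=> h1 h2 i hi; rewrite !coefM; apply: eq_bigr => j _.
have hj := ltn_ord j; rewrite h1 ?h2 //; lia.
Qed.
Lemma eqmX N p q k : eqm N p q -> eqm N (p ^+ k) (q ^+ k).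
Proof.
move=> h; elim: k => [|k IH]; first exact: eqm_refl.
by rewrite !exprS; apply: eqmM.
Qed.
Lemma eqm_deriv N p q : eqm N.+1 p q -> eqm N p^`() q^`().
Proof. by move=> h i hi; rewrite !coef_deriv h. Qed.

Lemma val_exp p k i : p`_0 = 0 -> (i < k)%N -> (p ^+ k)`_i = 0.
Proof.
move=> p0; elim: k i => [|k IH] i //= hi.
rewrite exprS coefM big1 // => [[j hj]] _ /=.
case: j hj => [|j] hj; first by rewrite p0 mul0r.
by rewrite IH ?mulr0 //; rewrite ltn_subLR //; lia.
Qed.

Lemma coef_comp_low p s i : s`_0 = 0 ->
  (p \Po s)`_i = \sum_(j < i.+1) p`_j * (s ^+ j)`_i.
Proof.
move=> s0; rewrite coef_comp_poly.
rewrite (big_ord_widen (size p + i.+1) (fun j => p`_j * (s ^+ j)`_i)) ?leq_addr //.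
rewrite [RHS](big_ord_widen (size p + i.+1) (fun j => p`_j * (s ^+ j)`_i)) ?leq_addl //.
rewrite big_mkcond [RHS]big_mkcond; apply: eq_bigr => j _.
case: ifP => h1; case: ifP => h2 //.
  by rewrite val_exp ?mulr0 //; rewrite ltnNge; move/negbT: h2; rewrite -ltnNge ltnS.
by rewrite nth_default ?mul0r // leqNgt h1.
Qed.

Lemma eqm_comp N p q s : s`_0 = 0 -> eqm N p q -> eqm N (p \Po s) (q \Po s).
Proof.
move=> s0 h i hi; rewrite !coef_comp_low //; apply: eq_bigr => j _.
have hj := ltn_ord j; rewrite h //; lia.
Qed.

Lemma eqm_Xn N p : eqm N ('X^N * p) 0.
Proof. by move=> i hi; rewrite coefXnM hi coef0. Qed.

End Eqm.

Lemma compositaE (R : comNzRingType) (g : nat -> R) m k : g 0%N = 0 ->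
  composita g m k = ((\poly_(i < m.+1) g i) ^+ k)`_m.
Proof.
move=> g0.
have -> : (\poly_(i < m.+1) g i) ^+ k = \prod_(i < k) \sum_(j < m.+1) g j *: 'X^j.
  by rewrite prodr_const card_ord poly_def.
rewrite bigA_distr_bigA /=.
under eq_bigr => t _ do rewrite scaler_prod prodrXr.
rewrite coef_sumMXn /composita.
rewrite big_mkcond [RHS]big_mkcond /=; apply: eq_bigr => t _.
rewrite eq_sym; case: eqP => //= _.
case: (boolP [forall i, 0 < (t i : nat)]%N) => // /forallPn [i hi].
rewrite (bigD1 i) //=; move: hi; rewrite lt0n negbK => /eqP ->.
by rewrite g0 mul0r.
Qed.

Lemma telesc (R : comNzRingType) (x : R) (d e : nat -> R) N :
  d 0%N = e 0%N -> (forall k, d k.+1 + d k = e k.+1) ->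
  (1 + x) * \sum_(k < N.+1) d k * x ^+ k =
  \sum_(k < N.+1) e k * x ^+ k + d N * x ^+ N.+1.
Proof.
move=> h0 hS; elim: N => [|N IH].
  by rewrite !big_ord1 !expr0 expr1 h0; ring.
rewrite big_ord_recr /= mulrDr IH [in RHS]big_ord_recr /= -hS.
rewrite !exprS; ring.
Qed.

Lemma eqm_addtail (R : comNzRingType) (t A : {poly R}) c N : t`_0 = 0 ->
  eqm N (A + c%:P * t ^+ N) A.
Proof.
by move=> t0 i hi; rewrite coefD coefCM val_exp // mulr0 addr0.
Qed.

Definition Qn (R : comNzRingType) (t : {poly R}) N n :=
  \sum_(k < N.+1) ((-1) ^+ k * ('C(n + k, k))%:R)%:P * t ^+ k.

Lemma negbin (R : comNzRingType) (t : {poly R}) N n : t`_0 = 0 ->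
  eqm N.+1 ((1 + t) ^+ n.+1 * Qn t N n) 1.
Proof.
move=> t0; elim: n => [|n IH].
  rewrite expr1 /Qn (@telesc _ t (fun k => ((-1) ^+ k * ('C(0 + k, k))%:R)%:P) (fun k => ((k == 0%N)%:R)%:P)).
  - apply: eqm_trans; first exact: eqm_addtail.
    rewrite big_ord_recl /= big1 ?addr0 ?expr0 ?mulr1 //.
    by move=> i _; rewrite mulr0n polyC0 mul0r.
  - by rewrite /= addn0 bin0 expr0 mul1r.
  - move=> k /=; rewrite !add0n !binn exprS !mulr1 -polyCD mulN1r addNr.
    by rewrite mulr0n polyC0.
rewrite exprSr -mulrA /Qn (@telesc _ t (fun k => ((-1) ^+ k * ('C(n.+1 + k, k))%:R)%:P) (fun k => ((-1) ^+ k * ('C(n + k, k))%:R)%:P)).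
- apply: eqm_trans (IH); apply: eqmM => //.
  exact: eqm_addtail.
- by rewrite /= !addn0 !bin0.
- move=> k /=; rewrite -polyCD addnS addSn binS natrD exprS.
  rewrite -!addnS addnC; congr (_ %:P); rewrite addnC addnS; ring.
Qed.

Lemma key_coef (R : numFieldType) N (U V : {poly R}) s : eqm N.+1 (U * V) 1 ->
  (s <= N)%N -> (U ^+ s.+1 * ('X * V)^`())`_s = (s == 0%N)%:R.
Proof.
move=> hUV hs.
have hD : ('X * V)^`() = V + 'X * V^`() by rewrite derivM derivX mul1r.
rewrite hD mulrDr.
have -> : U ^+ s.+1 * ('X * V^`()) = 'X * (U ^+ s.+1 * V^`()) by rewrite mulrCA.
case: s hs => [|s] hs.
  by rewrite coefD coefXM /= addr0 expr1 (hUV 0%N) // coef1.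
rewrite coefD coefXM /=.
have -> : U ^+ s.+2 * V = U ^+ s.+1 * (U * V) by rewrite exprS mulrA [U * _]mulrC.
rewrite (eqmM (@eqm_refl _ N.+1 (U ^+ s.+1)) hUV (i:=s.+1)) ?mulr1; last by lia.
have hd : eqm N (U^`() * V + U * V^`()) 0.
  by have := eqm_deriv hUV; rewrite derivM derivC.
have h2 : eqm N (U ^+ s.+2 * V^`()) (- (U^`() * U ^+ s)).
  have -> : U ^+ s.+2 * V^`() = U ^+ s.+1 * (U * V^`()) by rewrite exprS mulrA [U * _]mulrC.
  have h3 : eqm N (U * V^`()) (- (U^`() * V)).
    move=> i hi; rewrite coefN; have := hd i hi; rewrite coefD coef0.
    by move/eqP; rewrite addrC addr_eq0 => /eqP.
  apply: (eqm_trans (eqmM (@eqm_refl _ N (U ^+ s.+1)) h3)).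
  have -> : U ^+ s.+1 * - (U^`() * V) = - (U^`() * U ^+ s) * (U * V).
    by rewrite exprSr; ring.
  have e1 : - (U^`() * U ^+ s) = - (U^`() * U ^+ s) * 1 by rewrite mulr1.
  rewrite [X in eqm _ _ X]e1.
  apply: eqmM; [exact: eqm_refl | exact: eqm_le hUV].
rewrite (h2 s) ?coefN; last by lia.
have hder := deriv_exp U s.+1.
have e : (U^`() * U ^+ s)`_s = (U ^+ s.+1)`_s.+1.
  apply: (@mulIf _ (s.+1)%:R); first by rewrite pnatr_eq0.
  by rewrite !mulr_natr -coef_deriv hder coefMn.
by rewrite e subrr.
Qed.

Lemma mono (R : numFieldType) N (U V : {poly R}) j : eqm N.+1 (U * V) 1 ->
  (U ^+ N.+1 * ('X * V)^`() * ('X * V) ^+ j)`_N = (j == N)%:R.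
Proof.
move=> hUV.
set D := ('X * V)^`().
have -> : U ^+ N.+1 * D * ('X * V) ^+ j = 'X^j * (U ^+ N.+1 * V ^+ j * D).
  by rewrite exprMn; ring.
rewrite coefXnM; case: ltnP => hj.
  by rewrite eq_sym ltn_eqF.
have hN : N.+1 = ((N - j).+1 + j)%N by lia.
have -> : U ^+ N.+1 * V ^+ j * D = (U * V) ^+ j * (U ^+ (N - j).+1 * D).
  by rewrite hN exprD exprMn; ring.
rewrite (eqmM (@eqmX _ N.+1 (U * V) 1 j hUV) (@eqm_refl _ N.+1 (U ^+ (N - j).+1 * D)) (i := (N - j)%N)); last by lia.
rewrite expr1n mul1r /D (@key_coef _ N U V) //; last by lia.
congr (_ %:R); apply/eqP/eqP; lia.
Qed.

Unset Implicit Arguments. Set Strict Implicit.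

Lemma coef_sign (R : comNzRingType) m (p : {poly R}) i :
  ((-1) ^+ m * p)`_i = (-1) ^+ m * p`_i.
Proof.
elim: m => [|m IH]; first by rewrite !expr0 !mul1r.
by rewrite !exprS -!mulrA !mulN1r coefN IH.
Qed.

Lemma comp_exp (R : comNzRingType) (p q : {poly R}) k :
  (p ^+ k) \Po q = (p \Po q) ^+ k.
Proof.
elim: k => [|k IH]; first by rewrite !expr0 -polyC1 comp_polyC.
by rewrite !exprS comp_polyM IH.
Qed.

Theorem corollary4 (R : numFieldType) (f a : nat -> R)
  (hf0 : f 0%N = 0) (hf1 : f 1%N = 1)
  (ha0 : a 0%N = 0)
  (hrev : forall n : nat, (1 <= n)%N -> comp_coef f a n = (n == 1%N)%:R) :
  a 1%N = 1 /\
  forall n : nat, (1 < n)%N ->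
    a n = n%:R^-1 *
      \sum_(1 <= k < n) 'C(n + k - 1, n - 1)%:R *
        \sum_(1 <= j < k.+1) (-1) ^+ j * 'C(k, j)%:R * composita f (n + j - 1) j.
Proof.
have ha1 : a 1%N = 1.
  have := hrev 1%N isT; rewrite /comp_coef big_nat1 hf1 mul1r compositaE //.
  by rewrite expr1 coef_poly.
split => // n hn.
have [N hnN] : exists N, n = N.+1 by exists n.-1; lia.
subst n.
set V := \poly_(i < N.+1) a i.+1.
set Ap := \poly_(i < N.+2) a i.
have hAp : Ap = 'X * V.
  apply/polyP => i; rewrite coefXM !coef_poly; case: i => [|i] //=.
have Ap0 : Ap`_0 = 0 by rewrite hAp coefXM.
set W := \poly_(i < N.+1) f i.+1.
have hyp : forall m, (1 <= m <= N.+1)%N ->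
    \sum_(k < m) f k.+1 * (Ap ^+ k.+1)`_m = (m == 1%N)%:R.
  move=> m /andP[hm1 hm2]; rewrite -(hrev m hm1) /comp_coef big_add1 /= big_mkord.
  apply: eq_bigr => k _; rewrite compositaE //; congr (_ * _).
  have heq : eqm m.+1 (\poly_(i < m.+1) a i) Ap.
    by move=> i hi; rewrite !coef_poly hi; case: ifP => //; lia.
  by rewrite (eqmX k.+1 heq (ltnSn m)).
have hC1 : eqm (N.+1) (V * (W \Po Ap)) 1.
  move=> i hi.
  have e : ('X * W \Po Ap)`_i.+1 = (V * (W \Po Ap))`_i.
    by rewrite comp_polyM comp_polyX {1}hAp -mulrA coefXM.
  rewrite -e coef_comp_low // big_ord_recl /= coefXM /= mul0r add0r.
  rewrite coef1 -(hyp i.+1); last by lia.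
  apply: eq_bigr => j _; rewrite coefXM /= coef_poly.
  by case: ifP => //; have := ltn_ord j; lia.
set U := W \Po Ap.
have hUV : eqm N.+1 (U * V) 1 by rewrite mulrC.
set G := W - 1.
have G0 : G`_0 = 0 by rewrite coefB coef_poly coef1 /= hf1 subrr.
have hP := negbin (N:=N) N G0.
rewrite addrC subrK in hP.
set P := Qn G N N in hP.
have hPA : eqm N.+1 (P \Po Ap) (V ^+ N.+1).
  have h1 : eqm N.+1 (U ^+ N.+1 * (P \Po Ap)) 1.
    have := eqm_comp Ap0 hP.
    by rewrite comp_polyM comp_exp -polyC1 comp_polyC.
  have h2 := eqmM (@eqm_refl _ N.+1 (V ^+ N.+1)) h1.
  rewrite mulr1 mulrA -exprMn in h2.
  have h3 := eqmM (eqmX N.+1 (eqm_sym hUV)) (@eqm_refl _ N.+1 (P \Po Ap)).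
  rewrite expr1n mul1r in h3.
  rewrite [V * U]mulrC in h2; exact: (eqm_trans h3 h2).
have hmain : a N.+1 *+ N.+1 = P`_N.
  have e1 : a N.+1 *+ N.+1 = (Ap^`())`_N by rewrite coef_deriv coef_poly ltnSn.
  have e2 : eqm N.+1 (U ^+ N.+1 * Ap^`() * (P \Po Ap)) Ap^`().
    have h4 := eqmM (@eqm_refl _ N.+1 (U ^+ N.+1 * Ap^`())) hPA.
    apply: eqm_trans h4 _.
    have -> : U ^+ N.+1 * Ap^`() * V ^+ N.+1 = (U * V) ^+ N.+1 * Ap^`().
      by rewrite exprMn; ring.
    have h5 := eqmM (eqmX N.+1 hUV) (@eqm_refl _ N.+1 (Ap^`())).
    by rewrite expr1n mul1r in h5.
  rewrite e1 -(e2 N (ltnSn N)) comp_polyE mulr_sumr coef_sum.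
  under eq_bigr => j _ do rewrite -scalerAr coefZ hAp mono //.
  case: (ltnP N (size P)) => hs.
    rewrite (bigD1 (Ordinal hs)) //= eqxx mulr1 big1 ?addr0 // => j hj.
    suff -> : ((j : nat) == N) = false by rewrite mulr0.
    by apply/negbTE; apply: contra hj => /eqP hj; apply/eqP/val_inj.
  rewrite nth_default // big1 // => j _.
  suff -> : ((j : nat) == N) = false by rewrite mulr0.
  apply/negbTE/eqP => hj; move: (ltn_ord j) hs; rewrite hj. move=> h1 h2; move: (leq_trans h1 h2); by rewrite ltnn.
have hWc : forall i, (W ^+ i)`_N = composita f (N + i) i.
  case=> [|i]; first by rewrite compositaE // !expr0 addn0.
  rewrite compositaE //.
  have -> : \poly_(l < (N + i.+1).+1) f l = 'X * \poly_(l < N + i.+1) f l.+1.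
    apply/polyP => l; rewrite coefXM !coef_poly; case: l => [|l] //=.
  rewrite exprMn coefXnM ifF; last by lia.
  rewrite addnK; apply: (eqmX i.+1 _ (ltnSn N)) => l hl.
  by rewrite !coef_poly hl; case: ifP => //; lia.
have hGk : forall k, (G ^+ k)`_N =
    \sum_(i < k.+1) (-1) ^+ (k - i) * 'C(k, i)%:R * composita f (N + i) i.
  move=> k; rewrite /G addrC exprDn coef_sum; apply: eq_bigr => i _.
  by rewrite coefMn coef_sign hWc -mulr_natr; ring.
have hPN : P`_N = \sum_(k < N.+1) (-1) ^+ k * 'C(N + k, k)%:R * (G ^+ k)`_N.
  by rewrite /P /Qn coef_sum; apply: eq_bigr => k _; rewrite coefCM.
have D0 : composita f N 0 = 0.
  by rewrite compositaE // expr0 coef1; case: N hn {hmain hPN hWc hGk hPA hP hC1 hyp hUV V Ap W U G P hAp Ap0 G0}.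
apply: (@mulfI _ (N.+1)%:R); first by rewrite pnatr_eq0.
rewrite mulVKf ?pnatr_eq0 // mulr_natl hmain hPN.
rewrite big_ord_recl hGk big_ord1 addn0 D0 !mulr0 add0r big_add1 /= big_mkord.
apply: eq_bigr => k _; rewrite /bump /= ?add1n.
rewrite hGk big_ord_recl addn0 D0 mulr0 add0r big_add1 /= big_mkord.
rewrite !mulr_sumr; apply: eq_bigr => j _; rewrite /bump /= ?add1n.
have hjk : (j.+1 <= k.+1)%N by have := ltn_ord j; lia.
move: (k : nat) (j : nat) hjk => {}k {}j hjk.
have e1 : (N.+1 + k.+1 - 1 = N + k.+1)%N by lia.
have e2 : (N.+1 - 1 = N)%N by lia.
have e3 : (N.+1 + j.+1 - 1 = N + j.+1)%N by lia.
rewrite e1 e2 e3.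
have hb : 'C(N + k.+1, N) = 'C(N + k.+1, k.+1).
  by rewrite -[in RHS]bin_sub ?leq_addl // addnK.
have hsg : (-1) ^+ k.+1 * (-1) ^+ (k.+1 - j.+1) = (-1) ^+ j.+1 :> R.
  by rewrite -{1}(subnK hjk) exprD mulrAC -exprMn mulrNN mulr1 expr1n mul1r.
rewrite hb -hsg.
set x := (-1) ^+ k.+1; set y := (-1) ^+ (k.+1 - j.+1); set z := composita f (N + j.+1) j.+1.
ring.
Qed.
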